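(* The Sorgenfrey line $\mathbb S$ is homeomorphic to $\langle{}^\omega\omega,\sigma_{\mathbb S}\rangle$.
   Context: $\mathbb S$ is $\mathbb R$ with the topology generated by $\{[a,b):a,b\in\mathbb R\}$. ${}^\omega\omega$ is the set of infinite sequences of naturals; for $a,b\in{}^\omega\omega$, $a\triangleleft b$ iff there is $n$ with $a\upharpoonright n=b\upharpoonright n$ and $a(n)<b(n)$. $\sigma_{\mathbb S}$ is the topology on ${}^\omega\omega$ with base consisting of the sets $B(p,m)=\{p\}\cup\{r\in{}^\omega\omega: r\upharpoonright m=p\upharpoonright m,\ p\triangleleft r\}$, $p\in{}^\omega\omega$, $m\in\omega$. *)

(* Defs.v *)
From Stdlib Require Import Reals Lra Lia.
Open Scope R_scope.

Definition open_from_base {X I : Type} (Bas : I -> X -> Prop) (U : X -> Prop) : Prop :=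
  forall x, U x -> exists i, Bas i x /\ (forall y, Bas i y -> U y).

Definition homeomorphic {X Y : Type} (openX : (X -> Prop) -> Prop)
    (openY : (Y -> Prop) -> Prop) : Prop :=
  exists (f : X -> Y) (g : Y -> X),
    (forall x, g (f x) = x) /\ (forall y, f (g y) = y) /\
    (forall V, openY V -> openX (fun x => V (f x))) /\
    (forall U, openX U -> openY (fun y => U (g y))).

Definition sorg_base (ab : R * R) (x : R) : Prop := fst ab <= x < snd ab.
Definition sorgenfrey_open (U : R -> Prop) : Prop := open_from_base sorg_base U.

Definition baire := nat -> nat.

Definition tri (a b : baire) : Prop :=
  exists n, (forall i, (i < n)%nat -> a i = b i) /\ (a n < b n)%nat.

Definition sigmaS_base (pm : baire * nat) (r : baire) : Prop :=
  let (p, m) := pm in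
  r = p \/ ((forall i, (i < m)%nat -> r i = p i) /\ tri p r).

Definition sigmaS_open (U : baire -> Prop) : Prop := open_from_base sigmaS_base U.

(* Main.v *)
Require Import Defs.
From Stdlib Require Import Reals.
From Stdlib Require Import Lra Lia ZArith ClassicalEpsilon Classical FunctionalExtensionality.
Open Scope R_scope.

Definition h (n:nat) : R := (/2)^n.

Lemma h_pos n : 0 < h n.
Proof. unfold h; apply pow_lt; lra. Qed.
Lemma h_S n : h (S n) = h n / 2.
Proof. unfold h; simpl; lra. Qed.
Lemma h_0 : h 0 = 1.
Proof. reflexivity. Qed.
Lemma h_le n m : (n <= m)%nat -> h m <= h n.
Proof.
  induction 1. lra. rewrite h_S. pose proof (h_pos m). lra.
Qed.
Lemma h_le1 n : h n <= 1.
Proof. rewrite <- h_0. apply h_le; lia. Qed.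
Lemma h_S_le n : h (S n) <= /2.
Proof. rewrite h_S. pose proof (h_le1 n). lra. Qed.
Lemma h_small e : 0 < e -> exists n, h n < e.
Proof.
  intros He. destruct (pow_lt_1_zero (/2)) with (y := e) as [N HN]; auto.
  rewrite Rabs_right; lra.
  exists N. specialize (HN N (le_n _)). rewrite Rabs_right in HN. exact HN.
  pose proof (h_pos N). unfold h in *. lra.
Qed.

Definition digit (w:R) : nat :=
  epsilon (inhabits 0%nat) (fun d => 1 - h d <= w < 1 - h (S d)).

Lemma digit_ex w : 0 <= w < 1 -> exists d, 1 - h d <= w < 1 - h (S d).
Proof.
  intros Hw. destruct (h_small (1 - w)) as [n Hn]; [lra|].
  revert Hn. induction n; intros Hn.
  - rewrite h_0 in Hn. lra.
  - destruct (Rlt_or_le (h n) (1 - w)) as [H|H]. auto.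
    exists n. lra.
Qed.
Lemma digit_spec w : 0 <= w < 1 -> 1 - h (digit w) <= w < 1 - h (S (digit w)).
Proof. intros Hw. unfold digit. apply epsilon_spec. now apply digit_ex. Qed.
Lemma digit_uniq2 w d d' : 1 - h d <= w < 1 - h (S d) -> 1 - h d' <= w < 1 - h (S d') -> d = d'.
Proof.
  intros H1 H2. destruct (Nat.lt_total d d') as [Hl|[Hl|Hl]]; auto.
  - pose proof (h_le (S d) d' Hl). lra.
  - pose proof (h_le (S d') d Hl). lra.
Qed.
Lemma digit_unique w d : 1 - h d <= w < 1 - h (S d) -> digit w = d.
Proof.
  intros H. assert (0 <= w < 1). { pose proof (h_le1 d); pose proof (h_pos (S d)). lra. }
  apply (digit_uniq2 w); auto. now apply digit_spec.
Qed.
Lemma digit_mono w w' : 0<=w<1 -> 0<=w'<1 -> w <= w' -> (digit w <= digit w')%nat.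
Proof.
  intros H1 H2 H. pose proof (digit_spec w H1). pose proof (digit_spec w' H2).
  destruct (Nat.le_gt_cases (digit w) (digit w')) as [|Hl]; auto.
  pose proof (h_le (S (digit w')) (digit w) Hl). lra.
Qed.

Definition fl (x:R) : Z := (up x - 1)%Z.
Lemma fl_spec x : IZR (fl x) <= x < IZR (fl x) + 1.
Proof. unfold fl. rewrite minus_IZR. pose proof (archimed x). simpl. lra. Qed.
Lemma fl_unique x k : IZR k <= x < IZR k + 1 -> fl x = k.
Proof.
  intros H. assert (E : (k + 1)%Z = up x). { apply tech_up; rewrite plus_IZR; simpl; lra. }
  unfold fl. lia.
Qed.

Definition zenc (z:Z) : nat := if (0 <=? z)%Z then Z.to_nat (2*z) else Z.to_nat (-2*z - 1).
Definition zdec (n:nat) : Z :=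
  if (n mod 2 =? 0)%nat then Z.of_nat (n/2) else (- Z.of_nat (n/2 + 1))%Z.
Lemma zenc_inj a b : zenc a = zenc b -> a = b.
Proof. unfold zenc. destruct (Z.leb_spec 0 a); destruct (Z.leb_spec 0 b); lia. Qed.
Lemma zenc_zdec n : zenc (zdec n) = n.
Proof.
  pose proof (Nat.div_mod_eq n 2). pose proof (Nat.mod_upper_bound n 2).
  unfold zdec, zenc. destruct (Nat.eqb_spec (n mod 2) 0);
  destruct (Z.leb_spec 0 (Z.of_nat (n/2))); try lia;
  destruct (Z.leb_spec 0 (- Z.of_nat (n / 2 + 1))); lia.
Qed.

Fixpoint st (x:R) (k:nat) : R*R :=
  match k with
  | O => (IZR (fl x), 1)
  | S k => let s := st x k in
           let d := digit ((x - fst s) / snd s) in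
           (fst s + snd s * (1 - h d), snd s * h (S d))
  end.

Definition G (x:R) : baire := fun n =>
  match n with
  | O => zenc (fl x)
  | S k => digit ((x - fst (st x k)) / snd (st x k))
  end.

Lemma st_step x k : st x (S k) =
  (fst (st x k) + snd (st x k) * (1 - h (G x (S k))), snd (st x k) * h (S (G x (S k)))).
Proof. reflexivity. Qed.

Lemma div_in a L x : 0 < L -> a <= x < a + L -> 0 <= (x - a)/L < 1.
Proof.
  intros HL H. split.
  - unfold Rdiv. apply Rmult_le_pos; [lra | left; now apply Rinv_0_lt_compat].
  - apply Rmult_lt_reg_r with L; auto. unfold Rdiv. rewrite Rmult_assoc, Rinv_l; lra.
Qed.

Lemma st_inv x k : fst (st x k) <= x < fst (st x k) + snd (st x k) /\ 0 < snd (st x k) <= h k.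
Proof.
  induction k.
  - simpl. pose proof (fl_spec x). rewrite h_0. lra.
  - rewrite st_step. simpl fst; simpl snd.
    set (a := fst (st x k)) in *. set (L := snd (st x k)) in *.
    destruct IHk as [Hx HL].
    assert (Hw := div_in a L x (proj1 HL) Hx).
    assert (Hd := digit_spec _ Hw). change (G x (S k)) with (digit ((x - a)/L)).
    set (d := digit ((x - a)/L)) in *. set (w := (x - a)/L) in *.
    assert (E : x - a = w * L) by (unfold w; field; lra).
    pose proof (h_S d). pose proof (h_S k). pose proof (h_S_le d). pose proof (h_pos (S d)).
    split; [split|split]; nra.
Qed.

Lemma agree_st x y m : (forall i, (i <= m)%nat -> G y i = G x i) -> st y m = st x m.
Proof.
  induction m; intros H.
  - simpl. specialize (H 0%nat (le_n _)). simpl in H. apply zenc_inj in H. now rewrite H.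
  - rewrite (st_step x), (st_step y). rewrite IHm by (intros; apply H; lia).
    rewrite H by lia. reflexivity.
Qed.

Lemma agree_close x y m : (forall i, (i <= m)%nat -> G y i = G x i) -> Rabs (y - x) < h m.
Proof.
  intros H. pose proof (agree_st x y m H) as E.
  pose proof (st_inv x m). pose proof (st_inv y m). rewrite E in *.
  apply Rabs_def1; lra.
Qed.

Lemma G_inj x y : G x = G y -> x = y.
Proof.
  intros E. apply NNPP; intros Hne.
  assert (0 < Rabs (y - x)) by (apply Rabs_pos_lt; lra).
  destruct (h_small _ H) as [m Hm].
  assert (Rabs (y - x) < h m) by (apply agree_close; intros; now rewrite E).
  lra.
Qed.

Lemma right_nbhd x m : forall y, x <= y < fst (st x m) + snd (st x m) ->
  forall i, (i <= m)%nat -> G y i = G x i.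
Proof.
  induction m; intros y Hy i Hi.
  - assert (i = 0%nat) by lia. subst. simpl. simpl in Hy. pose proof (fl_spec x).
    rewrite (fl_unique y (fl x)); auto. lra.
  - pose proof (st_inv x m) as [Hx HL].
    rewrite st_step in Hy. simpl fst in Hy; simpl snd in Hy.
    set (a := fst (st x m)) in *. set (L := snd (st x m)) in *.
    assert (Hw := div_in a L x (proj1 HL) Hx).
    assert (Hd := digit_spec _ Hw). change (G x (S m)) with (digit ((x - a)/L)) in *.
    set (d := digit ((x - a)/L)) in *. set (w := (x - a)/L) in *.
    assert (E : x - a = w * L) by (unfold w; field; lra).
    pose proof (h_S d). pose proof (h_pos (S d)).
    assert (IH : forall i, (i <= m)%nat -> G y i = G x i).
    { apply IHm. destruct HL. split; [lra|]. nra. }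
    destruct (Nat.le_gt_cases i m) as [Him|Him]. now apply IH.
    assert (i = S m) by lia. subst i.
    simpl G. rewrite (agree_st x y m IH). fold a L. fold d.
    apply digit_unique. set (w' := (y - a)/L).
    assert (E' : y - a = w' * L) by (unfold w'; field; lra).
    destruct HL as [HL0 HL1].
    assert (w <= w').
    { destruct (Rle_or_lt w w'); auto. assert ((w - w') * L > 0) by (apply Rmult_lt_0_compat; lra).
      rewrite Rmult_minus_distr_r in H2. lra. }
    change (digit ((x - a) / L)) with d. split. lra.
    destruct (Rlt_or_le w' (1 - h (S d))); auto. exfalso.
    assert ((w' - (1 - h (S d))) * L >= 0) by (apply Rle_ge, Rmult_le_pos; lra).
    rewrite Rmult_minus_distr_r, Rmult_minus_distr_r in H3. rewrite Rmult_1_l in H3.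
    rewrite Rmult_minus_distr_l, Rmult_1_r in Hy. assert (L * h d = 2 * (L * h (S d))) by (rewrite H; field). nra.
Qed.

Lemma least_ex (P : nat -> Prop) : (exists n, P n) -> exists n, P n /\ forall i, (i < n)%nat -> ~ P i.
Proof.
  intros [n Hn]. revert Hn. induction n as [n IH] using (well_founded_induction lt_wf).
  intros Hn. destruct (classic (exists i, (i < n)%nat /\ P i)) as [[i [Hi Pi]]|Hno].
  - exact (IH i Hi Pi).
  - exists n. split; auto. intros i Hi Pi. apply Hno. eauto.
Qed.

Lemma G_mono x y : x < y -> fl x = fl y -> tri (G x) (G y).
Proof.
  intros Hxy Hfl.
  assert (Hex : exists n, G x n <> G y n).
  { apply NNPP; intros Hno. assert (G x = G y).
    { apply functional_extensionality; intros n. apply NNPP; eauto. }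
    apply G_inj in H. lra. }
  destruct (least_ex _ Hex) as [n [Hn Hl]].
  assert (Hag : forall i, (i < n)%nat -> G x i = G y i).
  { intros i Hi. apply NNPP; intros C. exact (Hl i Hi C). }
  exists n. split; auto.
  destruct n as [|k]. { simpl in Hn. rewrite Hfl in Hn. congruence. }
  assert (Est : st y k = st x k). { apply agree_st; intros; symmetry; apply Hag; lia. }
  pose proof (st_inv x k) as [Hx HL]. pose proof (st_inv y k) as [Hy _]. rewrite Est in Hy.
  simpl G in *. rewrite Est in *.
  set (a := fst (st x k)) in *. set (L := snd (st x k)) in *.
  assert (digit ((x - a)/L) <= digit ((y - a)/L))%nat.
  { apply digit_mono; try (apply div_in; tauto).
    unfold Rdiv. apply Rmult_le_compat_r. left; apply Rinv_0_lt_compat; lra. lra. }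
  lia.
Qed.

Fixpoint P (p:baire) (k:nat) : R*R :=
  match k with
  | O => (IZR (zdec (p 0%nat)), 1)
  | S k => let s := P p k in
           (fst s + snd s * (1 - h (p (S k))), snd s * h (S (p (S k))))
  end.

Lemma P_pos p k : 0 < snd (P p k).
Proof. induction k; simpl. lra. apply Rmult_lt_0_compat; auto. apply h_pos. Qed.

Lemma P_step1 p k : fst (P p k) <= fst (P p (S k)).
Proof. simpl. pose proof (P_pos p k). pose proof (h_le1 (p (S k))). nra. Qed.

Lemma P_step2 p k : fst (P p (S k)) + snd (P p (S k)) < fst (P p k) + snd (P p k).
Proof.
  simpl. pose proof (P_pos p k). pose proof (h_S (p (S k))). pose proof (h_pos (S (p (S k)))).
  assert (snd (P p k) * h (p (S k)) = 2 * (snd (P p k) * h (S (p (S k))))) by (rewrite H0; field).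
  nra.
Qed.

Lemma P_mono p k j : (k <= j)%nat -> fst (P p k) <= fst (P p j) /\
   fst (P p j) + snd (P p j) <= fst (P p k) + snd (P p k).
Proof.
  induction 1. lra. pose proof (P_step1 p m). pose proof (P_step2 p m). lra.
Qed.

Lemma P_lt p k j : fst (P p k) < fst (P p j) + snd (P p j).
Proof.
  destruct (Nat.le_gt_cases k j) as [H|H].
  - pose proof (P_mono p k j H). pose proof (P_pos p j). lra.
  - assert (j <= k)%nat by lia. pose proof (P_mono p j k H0). pose proof (P_pos p k). lra.
Qed.

Lemma G_surj p : exists x, G x = p.
Proof.
  set (E := fun r => exists k, r = fst (P p k)).
  destruct (completeness E) as [x [Hub Hlub]].
  { exists (fst (P p 0) + snd (P p 0)). intros r [k ->]. left. apply P_lt. }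
  { exists (fst (P p 0)). exists 0%nat. reflexivity. }
  assert (Hin : forall k, fst (P p k) <= x < fst (P p k) + snd (P p k)).
  { intros k. split. apply Hub. exists k; reflexivity.
    apply Rle_lt_trans with (fst (P p (S k)) + snd (P p (S k))); [|apply P_step2].
    apply Hlub. intros r [j ->]. left. apply P_lt. }
  exists x.
  assert (Hk : forall k, st x k = P p k /\ G x k = p k).
  { induction k.
    - assert (fl x = zdec (p 0%nat)). { apply fl_unique. apply (Hin 0%nat). }
      simpl. rewrite H. split; auto. apply zenc_zdec.
    - destruct IHk as [IH _].
      assert (Hd : G x (S k) = p (S k)).
      { simpl G. rewrite IH. apply digit_unique. pose proof (Hin (S k)) as HS.
        simpl in HS. set (a := fst (P p k)) in *. set (L := snd (P p k)) in *.
        pose proof (P_pos p k) as HL. fold L in HL.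
        pose proof (h_S (p (S k))).
        set (w := (x - a)/L). assert (Ew : x - a = w * L) by (unfold w; field; lra).
        split.
        + destruct (Rle_or_lt (1 - h (p (S k))) w); auto.
          assert ((1 - h (p (S k)) - w) * L > 0) by (apply Rmult_lt_0_compat; lra). nra.
        + destruct (Rlt_or_le w (1 - h (S (p (S k))))); auto.
          assert ((w - (1 - h (S (p (S k))))) * L >= 0) by (apply Rle_ge, Rmult_le_pos; lra).
          assert (L * h (p (S k)) = 2 * (L * h (S (p (S k))))) by (rewrite H; field). nra. }
      split; auto. rewrite st_step, IH, Hd. reflexivity. }
  apply functional_extensionality. intros n. apply Hk.
Qed.

Lemma tri_trans a b c : tri a b -> tri b c -> tri a c.
Proof.
  intros [n1 [H1 L1]] [n2 [H2 L2]].
  destruct (Nat.lt_total n1 n2) as [Hl|[Hl|Hl]].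
  - exists n1. split. intros i Hi. rewrite H1, H2; auto; lia. rewrite <- (H2 n1 Hl). auto.
  - subst. exists n2. split. intros i Hi. rewrite H1, H2; auto. lia.
  - exists n2. split. intros i Hi. rewrite H1, H2; auto; lia. rewrite (H1 n2 Hl). auto.
Qed.

Lemma tri_irrefl a : ~ tri a a.
Proof. intros [n [_ H]]. lia. Qed.

Lemma tri_asym a b : tri a b -> tri b a -> False.
Proof. intros H1 H2. apply (tri_irrefl a). eapply tri_trans; eauto. Qed.

Definition Finv (y : baire) : R := epsilon (inhabits 0) (fun x => G x = y).

Lemma G_Finv y : G (Finv y) = y.
Proof. unfold Finv. apply epsilon_spec. apply G_surj. Qed.

Lemma Finv_G x : Finv (G x) = x.
Proof. apply G_inj. apply G_Finv. Qed.

Theorem mainTheorem9 : @homeomorphic R baire sorgenfrey_open sigmaS_open.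
Proof.
  exists G, Finv. split; [exact Finv_G|]. split; [exact G_Finv|]. split.
  - intros V HV x Vx. destruct (HV _ Vx) as [[p m] [Hb HbV]]. simpl in Hb.
    exists (x, fst (st x m) + snd (st x m)). simpl. pose proof (st_inv x m) as [Hx _].
    split. unfold sorg_base; simpl; lra. intros y Hy. unfold sorg_base in Hy; simpl in Hy.
    pose proof (right_nbhd x m y Hy) as Hag.
    apply HbV. simpl.
    assert (HG : G y = G x \/ tri (G x) (G y)).
    { destruct (Rle_lt_or_eq_dec x y) as [Hl|He]; try lra.
      - right. apply G_mono; auto. apply zenc_inj. symmetry. apply (Hag 0%nat). lia.
      - left. now subst. }
    destruct Hb as [Hb|[Hb1 Hb2]].
    + rewrite <- Hb. destruct HG; [left|right]; auto. split; auto; intros; apply Hag; lia.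
    + destruct HG as [HG|HG].
      * rewrite HG. right; auto.
      * right. split. intros i Hi. rewrite Hag by lia. auto.
        eapply tri_trans; eauto.
  - intros U HU p Up. destruct (HU _ Up) as [[a b] [Hb HbU]]. simpl in Hb.
    destruct (h_small (b - Finv p)) as [m Hm]; [unfold sorg_base in Hb; simpl in Hb; lra|].
    exists (p, S m). simpl. split. left; reflexivity.
    intros r [->|[Hag Htri]]. exact Up.
    apply HbU. unfold sorg_base; simpl.
    assert (Hag' : forall i, (i <= m)%nat -> G (Finv r) i = G (Finv p) i).
    { intros i Hi. rewrite !G_Finv. apply Hag. lia. }
    pose proof (agree_close _ _ m Hag') as Hc.
    assert (Hfl : fl (Finv r) = fl (Finv p)) by (apply zenc_inj; apply (Hag' 0%nat); lia).
    destruct (total_order_T (Finv r) (Finv p)) as [[Hl|He]|Hl].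
    + exfalso. pose proof (G_mono _ _ Hl Hfl). rewrite !G_Finv in H. eapply tri_asym; eauto.
    + exfalso. assert (r = p) by (rewrite <- (G_Finv r), <- (G_Finv p), He; auto).
      subst. eapply tri_irrefl; eauto.
    + rewrite Rabs_right in Hc by lra. unfold sorg_base in Hb; simpl in Hb. lra.
Qed.
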